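(* Consider clipped ADOPT with $\beta_1,\beta_2\in[0,1)$, $\epsilon>0$, learning rates $\alpha_t>0$, clipping values $c_t\ge0$, and deterministic $\theta_0$: $m_0=0$, $v_0=g_0\odot g_0$, and for $t=1,\dots,T$, $$m_t=\beta_1m_{t-1}+(1-\beta_1)\,\mathrm{Clip}\Big(\frac{g_t}{\max\{\sqrt{v_{t-1}},\epsilon\}},c_t\Big),\quad\theta_t=\theta_{t-1}-\alpha_tm_t,\quad v_t=\beta_2v_{t-1}+(1-\beta_2)g_t\odot g_t,$$ where $g_0,g_1,\dots$ are random vectors in $\mathbb{R}^D$ with $\mathbb{E}\|g_t\|^2\le G^2$ for all $t\ge0$. Then for all $0\le t\le T$, $$\mathbb{E}\big[\|m_t\|^2\big]\le\frac{2G^2}{\epsilon^2}.$$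
   Context: For $a\in\mathbb{R}^D$ and $c\ge0$, $\mathrm{Clip}(a,c)_i=\min\{\max\{a_i,-c\},c\}$. Norms are Euclidean; $\odot$, square root, division and $\max\{\cdot,\epsilon\}$ act elementwise. *)

(* Defs.v *)
From HB Require Import structures.
From mathcomp Require Import all_boot all_order all_algebra.
From mathcomp Require Import all_classical all_reals all_analysis.
Set Implicit Arguments. Unset Strict Implicit. Unset Printing Implicit Defensive.
Import Order.TTheory GRing.Theory Num.Theory.
Local Open Scope ring_scope.

Section ADOPT.
Variables (R : realType) (D : nat).

Definition vecR := 'I_D -> R.

Definition sqnorm (a : vecR) : R := \sum_(i < D) a i ^+ 2.

Definition clip (a : vecR) (c : R) : vecR :=
  fun i => Num.min (Num.max (a i) (- c)) c.

Fixpoint adopt_state (beta1 beta2 eps : R) (alpha c : nat -> R)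
  (theta0 : vecR) (g : nat -> vecR) (t : nat) : vecR * vecR * vecR :=
  match t with
  | 0 => ((fun _ => 0), (fun i => g 0%N i * g 0%N i), theta0)
  | t'.+1 =>
      let: (m, v, th) := adopt_state beta1 beta2 eps alpha c theta0 g t' in
      let m' : vecR := fun i => beta1 * m i + (1 - beta1) *
          clip (fun j => g t j / Num.max (Num.sqrt (v j)) eps) (c t) i in
      let th' : vecR := fun i => th i - alpha t * m' i in
      let v' : vecR := fun i => beta2 * v i + (1 - beta2) * (g t i * g t i) in
      (m', v', th')
  end.

Definition adopt_m beta1 beta2 eps alpha c theta0 g t :=
  (adopt_state beta1 beta2 eps alpha c theta0 g t).1.1.

End ADOPT.

(* Main.v *)
Require Import Defs.
From HB Require Import structures.
From mathcomp Require Import all_boot all_order all_algebra.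
From mathcomp Require Import all_classical all_reals all_analysis.
From mathcomp Require Import lra ring.
Import Order.TTheory GRing.Theory Num.Theory.
Local Open Scope ring_scope.

Lemma clip_sq (R : realType) (y c : R) : 0 <= c ->
  (Num.min (Num.max y (- c)) c) ^+ 2 <= y ^+ 2.
Proof.
move=> c0.
have [h1|h1] := leP y (- c); have [h2|h2] := leP (- c) c; try nra;
have [h3|h3] := leP y c; try nra.
Qed.

Lemma div_sq (R : realType) (gi s eps : R) : 0 < eps ->
  (gi / Num.max s eps) ^+ 2 <= gi ^+ 2 / eps ^+ 2.
Proof.
move=> e0.
have m0 : 0 < Num.max s eps by rewrite lt_max e0 orbT.
have k0 : 0 <= (Num.max s eps)^-1 by rewrite invr_ge0 ltW.
have ke : (Num.max s eps)^-1 <= eps^-1.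
  by rewrite lef_pV2 ?posrE // le_max lexx orbT.
rewrite exprMn exprVn.
have h : (Num.max s eps ^+ 2)^-1 <= (eps ^+ 2)^-1.
  by rewrite -!exprVn !expr2; nra.
by rewrite ler_wpM2l // sqr_ge0.
Qed.

Lemma step_sq (R : realType) (b a x y : R) : 0 <= b -> b < 1 -> x ^+ 2 <= y ->
  (b * a + (1 - b) * x) ^+ 2 <= b * a ^+ 2 + (1 - b) * y.
Proof. move=> b0 b1 xy. have : 0 <= b * (1 - b) * (a - x) ^+ 2.
  by apply: mulr_ge0; [apply: mulr_ge0; lra | exact: sqr_ge0].
have : (1 - b) * x ^+ 2 <= (1 - b) * y by apply: ler_wpM2l; lra.
rewrite !expr2; nra.
Qed.

Lemma le_integral_nm d (T : measurableType d) (R : realType)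
  (mu : {measure set T -> \bar R}) (f1 f2 : T -> \bar R) :
  (forall x, (0 <= f1 x)%E) -> (forall x, (f1 x <= f2 x)%E) ->
  (\int[mu]_x f1 x <= \int[mu]_x f2 x)%E.
Proof.
move=> f10 f12.
have f20 x : (0 <= f2 x)%E by exact: le_trans (f10 x) (f12 x).
rewrite !ge0_integralE // !patch_setT.
apply: ereal_sup_le => _ [h hf <-]; exists h => // x.
exact: le_trans (hf x) (f12 x).
Qed.

Fixpoint Bseq (R : realType) (b1 eps : R) (h : nat -> R) (t : nat) : R :=
  match t with
  | 0 => 0
  | t'.+1 => b1 * Bseq R b1 eps h t' + (1 - b1) / eps ^+ 2 * h t
  end.

Lemma sqnorm_ge0 (R : realType) D (a : vecR R D) : 0 <= sqnorm a.
Proof. by apply: sumr_ge0 => i _; exact: sqr_ge0. Qed.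

Lemma m_bound (R : realType) D (b1 b2 eps : R) alpha c (th0 : vecR R D)
  (g : nat -> vecR R D) t :
  0 <= b1 -> b1 < 1 -> 0 < eps -> (forall t, 0 <= c t) ->
  sqnorm (adopt_m b1 b2 eps alpha c th0 g t) <=
  Bseq R b1 eps (fun s => sqnorm (g s)) t.
Proof.
move=> b0 b1' e0 c0.
elim: t => [|t IH].
  by rewrite /adopt_m /= /sqnorm big1 // => i _; rewrite expr0n.
move: IH; rewrite /adopt_m /=; case: adopt_state => [[m v] th] /= IH.
apply: (@le_trans _ _ (b1 * sqnorm m + (1 - b1) / eps ^+ 2 * sqnorm (g t.+1))).
  rewrite /sqnorm !mulr_sumr -big_split /=; apply: ler_sum => i _.
  have -> : (1 - b1) / eps ^+ 2 * g t.+1 i ^+ 2 = (1 - b1) * (g t.+1 i ^+ 2 / eps ^+ 2) by ring.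
  apply: step_sq => //.
  rewrite /clip /=; apply: (@le_trans _ _ ((g t.+1 i / Num.max (Num.sqrt (v i)) eps) ^+ 2)); first exact: clip_sq.
  exact: div_sq.
by apply: lerD => //; apply: ler_wpM2l.
Qed.

Theorem lemmaG13 (R : realType) (D : nat) (d : measure_display)
  (Omega : measurableType d) (P : probability Omega R)
  (beta1 beta2 eps G : R) (alpha c : nat -> R) (theta0 : 'I_D -> R)
  (g : nat -> Omega -> 'I_D -> R) (T : nat) :
  0 <= beta1 -> beta1 < 1 -> 0 <= beta2 -> beta2 < 1 -> 0 < eps ->
  (forall t, 0 < alpha t) -> (forall t, 0 <= c t) ->
  (forall t (i : 'I_D), measurable_fun setT (fun w => g t w i)) ->
  (forall t, (\int[P]_w (sqnorm (g t w))%:E <= (G ^+ 2)%:E)%E) ->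
  forall t, (t <= T)%N ->
  (\int[P]_w (sqnorm (adopt_m beta1 beta2 eps alpha c theta0 (fun s => g s w) t))%:E
     <= (2 * G ^+ 2 / eps ^+ 2)%:E)%E.
Proof.
move=> b0 b1 _ _ e0 _ c0 mg hG t _.
pose B t w := Bseq R beta1 eps (fun s => sqnorm (g s w)) t.
have k0 : 0 <= (1 - beta1) / eps ^+ 2.
  by apply: divr_ge0; [lra | exact: sqr_ge0].
have mh s : measurable_fun setT (fun w => sqnorm (g s w)).
  rewrite /sqnorm; apply: measurable_sum => i; exact: measurable_realfun.measurable_funX.
have mB s : measurable_fun setT (B s).
  elim: s => [|s IH]; first exact: measurable_cst.
  apply: measurable_realfun.measurable_funD; apply: measurable_realfun.measurable_funM => //; exact: measurable_cst.
have B0 s w : 0 <= B s w.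
  elim: s => [|s IH] //=; apply: addr_ge0; apply: mulr_ge0 => //; exact: sqnorm_ge0.
have KG : 0 <= G ^+ 2 / eps ^+ 2 by apply: divr_ge0; exact: sqr_ge0.
have EB s : (\int[P]_w (B s w)%:E <= (G ^+ 2 / eps ^+ 2)%:E)%E.
  elim: s => [|s IH].
    by rewrite integral0_eq // lee_fin.
  rewrite /B /=.
  under eq_integral => w _ do rewrite EFinD (EFinM beta1) (EFinM ((1 - beta1) / eps ^+ 2)).
  rewrite ge0_integralD //; last 4 first.
  - by move=> w _; rewrite -EFinM lee_fin; apply: mulr_ge0 => //; exact: (B0 s w).
  - by apply/measurable_realfun.measurable_EFinP; apply: measurable_realfun.measurable_funM; [exact: measurable_cst | exact: (mB s)].
  - by move=> w _; rewrite -EFinM lee_fin; apply: mulr_ge0 => //; exact: sqnorm_ge0.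
  - by apply/measurable_realfun.measurable_EFinP; apply: measurable_realfun.measurable_funM => //; exact: measurable_cst.
  rewrite ge0_integralZl_EFin //; last 2 first.
  - by move=> w _; rewrite lee_fin; exact: (B0 s w).
  - exact/measurable_realfun.measurable_EFinP/(mB s).
  rewrite ge0_integralZl_EFin //; last 2 first.
  - by move=> w _; rewrite lee_fin; exact: sqnorm_ge0.
  - exact/measurable_realfun.measurable_EFinP.
  apply: (@le_trans _ _ (beta1%:E * (G ^+ 2 / eps ^+ 2)%:E +
     ((1 - beta1) / eps ^+ 2)%:E * (G ^+ 2)%:E)%E).
    by apply: leeD; apply: lee_wpmul2l; rewrite // lee_fin.
  rewrite -!EFinM -EFinD lee_fin.
  have -> : beta1 * (G ^+ 2 / eps ^+ 2) + (1 - beta1) / eps ^+ 2 * G ^+ 2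
    = G ^+ 2 / eps ^+ 2 by ring.
  by [].
apply: (@le_trans _ _ (\int[P]_w (B t w)%:E)%E).
  apply: le_integral_nm => w; first by rewrite lee_fin; exact: sqnorm_ge0.
  rewrite lee_fin; exact: m_bound.
apply: (@le_trans _ _ (G ^+ 2 / eps ^+ 2)%:E); first exact: EB.
rewrite lee_fin -!mulrA; lra.
Qed.
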